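(* Let $X=\{x_j:j\in J\}\subset\mathbb{R}^2$ be finite with quadratic min-power centre $s^*$, centroid $M$ and $1$-centre $C$. Let $J^*\subseteq J$ be the support of a KKT multiplier vector for $s^*$ with the minimum possible number of nonzero entries, chosen so that $\{x_j:j\in J^*\}$ is the vertex set of a face of a farthest point Delaunay triangulation of $X$, and let $\mathcal{M}^*=\{M_j:j\in J^*\}$. If $M\in\mathrm{conv}(\mathcal{M}^* )$ then $s^*=C$.
   Context: $n=|J|$; $P(s)=\sum_{i\in J}\|s-x_i\|^2+\max_{i\in J}\|s-x_i\|^2$ and $s^*$ is its unique minimiser; $M=\frac1n\sum_i x_i$; $M_j=\frac{1}{n+1}\big(x_j+\sum_{i\in J}x_i\big)$; $C$ is the centre of the minimum enclosing circle of $X$. A KKT multiplier vector for $s^*$ is $(\lambda_j)_{j\in J}$ with $\lambda_j\geq0$, $\sum_j\lambda_j=1$, $s^*=\sum_j\lambda_jM_j$, and $\lambda_j\big(\|s^*-x_j\|-\max_{i}\|s^*-x_i\|\big)=0$ for all $j$. A farthest point Delaunay triangulation of $X$ is a triangulation of the extreme points of $X$ in which the circumcircle of every triangle encloses all of $X$; its faces are its vertices, edges and triangles. *)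

(* Defs.v *)
From HB Require Import structures.
From mathcomp Require Import all_boot all_order all_algebra.
From mathcomp Require Import reals.
Set Implicit Arguments. Unset Strict Implicit. Unset Printing Implicit Defensive.
Import Order.TTheory GRing.Theory Num.Theory.
Local Open Scope ring_scope.

Section Defs.
Variables (R : realType) (J : finType).
Notation pt := 'rV[R]_2.

Definition sqdist (a b : pt) : R := \sum_(k < 2) (a 0 k - b 0 k) ^+ 2.
Definition dist (a b : pt) : R := Num.sqrt (sqdist a b).

(* max_{i in J} ||s - x_i||  (distances are >= 0, so 0 is a neutral start) *)
Definition maxdist (x : J -> pt) (s : pt) : R := \big[Num.max/0]_(i : J) dist s (x i).

Definition Ppow (x : J -> pt) (s : pt) : R :=
  \sum_(i : J) dist s (x i) ^+ 2 + maxdist x s ^+ 2.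

Definition min_power_centre (x : J -> pt) (s : pt) : Prop :=
  forall t : pt, Ppow x s <= Ppow x t.

Definition mec_centre (x : J -> pt) (c : pt) : Prop :=
  forall t : pt, maxdist x c <= maxdist x t.

Definition centroid (x : J -> pt) : pt := (#|J|%:R)^-1 *: \sum_(i : J) x i.

Definition Mj (x : J -> pt) (j : J) : pt := ((#|J|.+1)%:R)^-1 *: (x j + \sum_(i : J) x i).

Definition KKT (x : J -> pt) (s : pt) (lam : J -> R) : Prop :=
  [/\ forall j, 0 <= lam j,
      \sum_(j : J) lam j = 1,
      s = \sum_(j : J) lam j *: Mj x j
    & forall j, lam j * (dist s (x j) - maxdist x s) = 0].

Definition supp (lam : J -> R) : {set J} := [set j | lam j != 0].

Definition in_hull (f : J -> pt) (A : {set J}) (p : pt) : Prop :=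
  exists w : J -> R,
    [/\ forall j, 0 <= w j,
        forall j, j \notin A -> w j = 0,
        \sum_(j : J) w j = 1
      & p = \sum_(j : J) w j *: f j].

Definition extreme (x : J -> pt) (j : J) : Prop := ~ in_hull x (setT :\ j) (x j).

Definition aff_indep (x : J -> pt) (A : {set J}) : Prop :=
  forall w : J -> R,
    (forall j, j \notin A -> w j = 0) ->
    \sum_(j : J) w j = 0 -> \sum_(j : J) w j *: x j = 0 ->
    forall j, w j = 0.

(* a geometric simplicial complex in R^2 with vertices among the x_j;
   a simplex is given by its (nonempty) vertex set *)
Definition simplicial_complex (x : J -> pt) (K : {set {set J}}) : Prop :=
  [/\ forall A : {set J}, A \in K -> [/\ A != set0, (#|A| <= 3)%N & aff_indep x A],
      forall A B : {set J}, A \in K -> B \subset A -> B != set0 -> B \in K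
    & forall (A B : {set J}) (p : pt), A \in K -> B \in K ->
        in_hull x A p -> in_hull x B p -> in_hull x (A :&: B) p].

Definition triangulation_extreme (x : J -> pt) (K : {set {set J}}) : Prop :=
  [/\ simplicial_complex x K,
      forall (A : {set J}) (j : J), A \in K -> j \in A -> extreme x j,
      forall j, extreme x j -> [set j] \in K
    & forall p, (forall E : {set J}, (forall j, j \in E <-> extreme x j) -> in_hull x E p) ->
        exists2 A, A \in K & in_hull x A p].

(* farthest point Delaunay triangulation of X: the circumcircle of every
   triangle encloses all of X.  Its faces are the elements of K. *)
Definition FPDT (x : J -> pt) (K : {set {set J}}) : Prop :=
  triangulation_extreme x K /\
  forall A : {set J}, A \in K -> #|A| = 3%N ->
    exists (c : pt) (r : R),
      (forall j, j \in A -> dist c (x j) = r) /\ (forall i, dist c (x i) <= r).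

End Defs.

(* Main.v *)
Require Import Defs.
From HB Require Import structures.
From mathcomp Require Import all_boot all_order all_algebra.
From mathcomp Require Import reals.
From mathcomp Require Import ring lra.
Import Order.TTheory GRing.Theory Num.Theory.
Local Open Scope ring_scope.

Section Aux.
Variables (R : realType) (J : finType) (x : J -> 'rV[R]_2).

Lemma sqdist_ge0 (a b : 'rV[R]_2) : 0 <= sqdist a b.
Proof. by apply: sumr_ge0 => k _; rewrite sqr_ge0. Qed.

Lemma dist_sq (a b : 'rV[R]_2) : dist a b ^+ 2 = sqdist a b.
Proof. by rewrite /dist sqr_sqrtr // sqdist_ge0. Qed.

Lemma dist_ge0 (a b : 'rV[R]_2) : 0 <= dist a b.
Proof. exact: sqrtr_ge0. Qed.

Lemma dist_le_max (t : 'rV[R]_2) i : dist t (x i) <= maxdist x t.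
Proof. exact: (le_bigmax 0 (fun i => dist t (x i)) i). Qed.

Lemma maxdist_ge0 (t : 'rV[R]_2) : 0 <= maxdist x t.
Proof.
rewrite /maxdist; apply: (big_ind (fun v => 0 <= v)) => //; last by move=> i _; exact: dist_ge0.
by move=> a b ha hb; rewrite le_max ha.
Qed.

Lemma key (mu : J -> R) (s t : 'rV[R]_2) :
  (forall j, 0 <= mu j) -> \sum_j mu j = 1 -> s = \sum_j mu j *: x j ->
  (forall j, mu j != 0 -> dist s (x j) = maxdist x s) ->
  maxdist x t <= maxdist x s -> t = s.
Proof.
move=> mu0 mu1 sE mud tle.
set r := maxdist x s.
have idk k : \sum_j mu j * (t 0 k - x j 0 k) ^+ 2 =
   (t 0 k - s 0 k) ^+ 2 + \sum_j mu j * (s 0 k - x j 0 k) ^+ 2.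
  have sk : s 0 k = \sum_j mu j * x j 0 k.
    by rewrite sE summxE; apply: eq_bigr => j _; rewrite mxE.
  have e0 : \sum_j mu j * (s 0 k - x j 0 k) = 0.
    rewrite (eq_bigr (fun j => s 0 k * mu j - mu j * x j 0 k)); last first.
      by move=> j _; rewrite mulrBr mulrC.
    by rewrite sumrB -mulr_sumr mu1 mulr1 -sk subrr.
  rewrite (eq_bigr (fun j => (t 0 k - s 0 k) ^+ 2 * mu j +
     (2 * (t 0 k - s 0 k)) * (mu j * (s 0 k - x j 0 k)) + mu j * (s 0 k - x j 0 k) ^+ 2)); last first.
    move=> j _; have -> : t 0 k - x j 0 k = (t 0 k - s 0 k) + (s 0 k - x j 0 k) by rewrite addrA subrK.
    by rewrite sqrrD; ring.
  by rewrite !big_split /= -!mulr_sumr mu1 e0 mulr0 addr0 mulr1.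
have L : \sum_j mu j * sqdist t (x j) = sqdist t s + \sum_j mu j * sqdist s (x j).
  rewrite /sqdist (eq_bigr (fun j => \sum_(k < 2) mu j * (t 0 k - x j 0 k) ^+ 2)); last first.
    by move=> j _; rewrite mulr_sumr.
  rewrite exchange_big /= (eq_bigr _ (fun k _ => idk k)) big_split /=; congr (_ + _).
  by rewrite exchange_big; apply: eq_bigr => j _; rewrite mulr_sumr.
have R1 : \sum_j mu j * sqdist s (x j) = r ^+ 2.
  rewrite -[r ^+ 2]mul1r -mu1 mulr_suml; apply: eq_bigr => j _.
  have [->|nz] := eqVneq (mu j) 0; first by rewrite !mul0r.
  by rewrite -dist_sq mud.
have R2 : \sum_j mu j * sqdist t (x j) <= r ^+ 2.
  rewrite -[r ^+ 2]mul1r -mu1 mulr_suml; apply: ler_sum => j _.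
  apply: ler_wpM2l => //; rewrite -dist_sq lerXn2r ?nnegrE ?dist_ge0 ?maxdist_ge0 //.
  exact: le_trans (dist_le_max t j) tle.
have h0 : sqdist t s <= 0 by move: R2; rewrite L R1 -lerBrDr subrr.
have hk k : (t 0 k - s 0 k) ^+ 2 = 0.
  apply/eqP; rewrite eq_le sqr_ge0 andbT; apply: le_trans h0.
  rewrite /sqdist (bigD1 k) //= lerDl; apply: sumr_ge0 => i _; exact: sqr_ge0.
apply/rowP => k; apply/eqP; rewrite -subr_eq0 -sqrf_eq0; apply/eqP; exact: hk.
Qed.
End Aux.
Theorem proposition2 (R : realType) (J : finType) (x : J -> 'rV[R]_2)
    (s C : 'rV[R]_2) (Jstar : {set J}) :
  injective x ->
  min_power_centre x s ->
  mec_centre x C ->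
  (exists lam : J -> R, KKT x s lam /\ supp lam = Jstar) ->
  (forall lam : J -> R, KKT x s lam -> #|Jstar| <= #|supp lam|)%N ->
  (exists K : {set {set J}}, FPDT x K /\ Jstar \in K) ->
  in_hull (Mj x) Jstar (centroid x) ->
  s = C.
Proof.
move=> _ _ mecC [lam [[lam0 lam1 sE slack] suppE]] _ _ [w [w0 wout w1 ME]].
set nR : R := #|J|%:R.
set S := \sum_i x i.
set A := \sum_j lam j *: x j.
set B := \sum_j w j *: x j.
have cE : (#|J|.+1)%:R = nR + 1 by rewrite /nR -natr1.
set c : R := (nR + 1)^-1.
have nR0 : nR != 0.
  rewrite /nR pnatr_eq0 -lt0n; apply/card_gt0P.
  case: (pickP J) => [j _|h]; first by exists j.
  by move: lam1; rewrite big_pred0 // => /eqP; rewrite eq_sym oner_eq0.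
have c0 : nR + 1 != 0 by rewrite -cE pnatr_eq0.
have comb (v : J -> R) : \sum_j v j = 1 ->
    \sum_j v j *: Mj x j = c *: (\sum_j v j *: x j + S).
  move=> v1; rewrite /Mj cE -/S -/c.
  rewrite (eq_bigr (fun j => c *: (v j *: x j + v j *: S))); last first.
    by move=> j _; rewrite scalerA mulrC -scalerA scalerDr.
  by rewrite -scaler_sumr big_split /= -scaler_suml v1 scale1r.
have s1 : s = c *: (A + S) by rewrite sE comb.
have M1 : centroid x = c *: (B + S) by rewrite ME comb.
have M2 : S = nR *: centroid x by rewrite /centroid scalerA divff // scale1r.
have MB : centroid x = B.
  have : (nR + 1) *: centroid x = B + nR *: centroid x.
    by rewrite {1}M1 scalerA divff // scale1r -M2.
  by rewrite scalerDl scale1r addrC => /(congr1 (fun v => v - nR *: centroid x)); rewrite !addrK.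
set mu := fun j => c * (lam j + nR * w j).
have ge0c : 0 <= c by rewrite invr_ge0 addr_ge0 // ler0n.
have CS : C = s.
  apply: (@key R J x mu).
  - move=> j; rewrite /mu mulr_ge0 // addr_ge0 // mulr_ge0 // ler0n.
  - rewrite /mu -mulr_sumr big_split /= -mulr_sumr lam1 w1 mulr1 addrC mulVf //.
  - rewrite s1 M2 MB /A /B scaler_sumr -big_split /= scaler_sumr.
    apply: eq_bigr => j _; by rewrite /mu scalerA -scalerDl scalerA mulrDr mulrA.
  - move=> j; rewrite /mu; have [l0|lnz] := eqVneq (lam j) 0.
      have : j \notin Jstar by rewrite -suppE inE l0 eqxx.
      by move/wout => ->; rewrite l0 mulr0 addr0 mulr0 eqxx.
    move=> _; move: (slack j) => /eqP; rewrite mulf_eq0 (negbTE lnz) /= subr_eq0.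
    by move/eqP.
  - exact: mecC.
by rewrite CS.
Qed.
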